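(* Let $(X,d)$ be a proper geodesic metric space with a distinguished base point $0$, and let $(x_n)$ be a sequence in $X$ converging to a point $\omega\in\partial_d X$ of the metric boundary. Then $(x_n)$ converges to infinity in the Gromov sense, i.e. $\lim_{n,m\to\infty}(x_n\cdot x_m)=\infty$.
   Context: A metric space is proper if closed bounded sets are compact, and geodesic if any two points $x,y$ are joined by an isometric image of $[0,d(x,y)]$. The Gromov product with respect to the base point $0$ is $(x\cdot y)=\tfrac12\big(d(x,0)+d(y,0)-d(x,y)\big)$. For $y\in X$ let $\varphi_y(x)=d(x,0)-d(x,y)$. The metric compactification $\overline{X}^d$ is the maximal ideal space of the commutative unital C*-algebra generated by the continuous functions vanishing at infinity on $X$, the constants, and the functions $\varphi_y$ ($y\in X$); the metric boundary is $\partial_d X=\overline{X}^d\setminus X$. Concretely, a sequence $(x_n)$ in $X$ converges to a point of $\partial_d X$ iff it eventually leaves every compact subset of $X$ and $\varphi_y(x_n)$ converges for every $y\in X$; two such sequences converge to the same boundary point iff the limits of $\varphi_z$ along them agree for every $z\in X$. *)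

(* Defs.v *)
From Stdlib Require Import Reals List.
Open Scope R_scope.

Section MetricDefs.
Variables (X : Type) (d : X -> X -> R).

Definition is_metric : Prop :=
  (forall x y, 0 <= d x y) /\
  (forall x y, d x y = 0 <-> x = y) /\
  (forall x y, d x y = d y x) /\
  (forall x y z, d x z <= d x y + d y z).

Definition mopen (U : X -> Prop) : Prop :=
  forall x, U x -> exists eps, 0 < eps /\ forall y, d x y < eps -> U y.

Definition mclosed (F : X -> Prop) : Prop := mopen (fun x => ~ F x).

Definition mbounded (F : X -> Prop) : Prop :=
  exists (c : X) (r : R), forall x, F x -> d c x <= r.

Definition mcompact (K : X -> Prop) : Prop :=
  forall (I : Type) (U : I -> X -> Prop),
    (forall i, mopen (U i)) ->
    (forall x, K x -> exists i, U i x) ->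
    exists l : list I, forall x, K x -> exists i, In i l /\ U i x.

Definition proper_space : Prop :=
  forall F, mclosed F -> mbounded F -> mcompact F.

Definition geodesic_space : Prop :=
  forall x y, exists g : R -> X,
    g 0 = x /\ g (d x y) = y /\
    forall s t, 0 <= s <= d x y -> 0 <= t <= d x y ->
      d (g s) (g t) = Rabs (s - t).

Definition gromov_prod (o x y : X) : R := (d x o + d y o - d x y) / 2.

Definition phi (o y x : X) : R := d x o - d x y.

(** (x_n) converges to a point of the metric boundary ∂_d X
    (concrete characterization from the context): it eventually leaves every
    compact set, and phi_y(x_n) converges for every y. *)
Definition converges_to_metric_boundary (o : X) (x : nat -> X) : Prop :=
  (forall K, mcompact K -> exists N, forall n, (N <= n)%nat -> ~ K (x n)) /\
  (forall y, exists l, Un_cv (fun n => phi o y (x n)) l).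

Definition gromov_to_infinity (o : X) (x : nat -> X) : Prop :=
  forall M : R, exists N, forall n m, (N <= n)%nat -> (N <= m)%nat ->
    M <= gromov_prod o (x n) (x m).

End MetricDefs.

(* Main.v *)
Require Import Defs.
From Stdlib Require Import Reals Lra Lia List.
Open Scope R_scope.

Lemma list_cauchy (X : Type) (d : X -> X -> R) (o : X) (x : nat -> X)
  (hc : forall y, exists l, Un_cv (fun n => phi X d o y (x n)) l) (l : list X) :
  exists N, forall w n m, In w l -> (N <= n)%nat -> (N <= m)%nat ->
    Rabs (phi X d o w (x n) - phi X d o w (x m)) < 1.
Proof.
  induction l as [|w l IH].
  - exists 0%nat. intros w n m [].
  - destruct IH as [N1 H1]. destruct (hc w) as [L HL].
    destruct (HL (1/2)) as [N2 H2]; [lra|].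
    exists (Nat.max N1 N2). intros w' n m Hin Hn Hm.
    destruct Hin as [<-|Hin].
    + assert (A := H2 n ltac:(unfold ge; lia)).
      assert (B := H2 m ltac:(unfold ge; lia)).
      unfold Rdist in A, B.
      apply Rabs_def2 in A. apply Rabs_def2 in B.
      apply Rabs_def1; lra.
    + apply H1; auto; lia.
Qed.

Theorem mainTheorem2 (X : Type) (d : X -> X -> R) (o : X)
  (hmet : is_metric X d) (hprop : proper_space X d) (hgeo : geodesic_space X d)
  (x : nat -> X) (hx : converges_to_metric_boundary X d o x) :
  gromov_to_infinity X d o x.
Proof.
  destruct hmet as [hpos [hzero [hsym htri]]].
  destruct hx as [hesc hc].
  intro M.
  set (t := Rabs M + 2).
  assert (Ht0 : 0 <= t) by (unfold t; pose proof (Rabs_pos M); lra).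
  assert (HtM : M + 2 <= t) by (unfold t; pose proof (Rle_abs M); lra).
  set (K := fun y => d o y <= t).
  assert (Kcl : mclosed X d K).
  { intros y Hy. unfold K in Hy. exists (d o y - t). split; [lra|].
    intros y' Hy'. unfold K. pose proof (htri o y' y). rewrite (hsym y' y) in H. lra. }
  assert (Kbd : mbounded X d K) by (exists o, t; auto).
  assert (Kc := hprop K Kcl Kbd).
  destruct (hesc K Kc) as [N1 HN1].
  destruct (Kc X (fun w y => d w y < 1)) as [l Hl].
  { intros w y Hy. exists (1 - d w y). split; [lra|].
    intros y' Hy'. pose proof (htri w y y'). lra. }
  { intros y _. exists y. assert (d y y = 0) by (apply hzero; reflexivity). lra. }
  destruct (list_cauchy X d o x hc l) as [N2 HN2].
  exists (Nat.max N1 N2). intros n m Hn Hm.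
  assert (Dn : t < d o (x n)).
  { assert (~ K (x n)) by (apply HN1; lia). unfold K in H. lra. }
  destruct (hgeo o (x n)) as [g [g0 [gD giso]]].
  set (D := d o (x n)) in *.
  set (z := g t).
  assert (dz : d o z = t).
  { unfold z. rewrite <- g0 at 1. rewrite giso; try lra.
    rewrite Rabs_minus_sym, Rminus_0_r, Rabs_right; lra. }
  assert (dzx : d z (x n) = D - t).
  { unfold z. rewrite <- gD. rewrite giso; try lra.
    rewrite Rabs_minus_sym, Rabs_right; lra. }
  assert (Kz : K z) by (unfold K; lra).
  destruct (Hl z Kz) as [w [Hw Hwz]].
  assert (Hc := HN2 w n m Hw ltac:(lia) ltac:(lia)).
  assert (Lip : forall y, Rabs (phi X d o z y - phi X d o w y) <= d w z).
  { intro y. unfold phi. apply Rabs_le. pose proof (htri y w z). pose proof (htri y z w).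
    rewrite (hsym w z) in *. split; lra. }
  pose proof (Lip (x n)) as L1. pose proof (Lip (x m)) as L2.
  pose proof (Rle_abs (phi X d o z (x n) - phi X d o w (x n))).
  pose proof (Rle_abs (- (phi X d o z (x n) - phi X d o w (x n)))). rewrite Rabs_Ropp in *.
  pose proof (Rle_abs (phi X d o z (x m) - phi X d o w (x m))).
  pose proof (Rle_abs (- (phi X d o z (x m) - phi X d o w (x m)))). rewrite Rabs_Ropp in *.
  apply Rabs_def2 in Hc.
  assert (phin : phi X d o z (x n) = t).
  { unfold phi. rewrite (hsym (x n) o), (hsym (x n) z). fold D. lra. }
  unfold gromov_prod.
  pose proof (htri (x n) z (x m)).
  unfold phi in *. rewrite (hsym (x n) z) in *.
  assert (d (x n) o = D) by (unfold D; apply hsym).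
  pose proof (hsym z (x m)). lra.
Qed.
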